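(* For all real $x\ge4$, $H(x)<\dfrac{2\log(x)}{1+\frac{6}{\pi^2x}}$.
   Context: $H(x)=\int_0^1\frac{t^x-1}{t-1}\,dt$ for real $x\ge1$; it satisfies $H(n)=1+\frac12+\cdots+\frac1n$ for $n\in\mathbb{N}$ and $H(x)=\psi(x+1)+\gamma$ with $\psi=\Gamma'/\Gamma$ the digamma function. *)

(* Defs.v *)
From Stdlib Require Import Reals.
From Coquelicot Require Import Coquelicot.
Open Scope R_scope.

(* Values at the endpoints t = 0, t = 1 are irrelevant for the Riemann
   integral (removable singularity at t = 1, bounded integrand). *)
Definition H_integrand (x t : R) : R := (Rpower t x - 1) / (t - 1).

Definition H (x : R) : R := RInt (H_integrand x) 0 1.

(* Main.v *)
Require Import Defs.
From Stdlib Require Import Reals Lra ZArith.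
From Coquelicot Require Import Coquelicot.
Open Scope R_scope.

Lemma ln_le_sub1 y : 0 < y -> ln y <= y - 1.
Proof. intros Hy. pose proof (exp_ineq1_le (ln y)) as E. rewrite exp_ln in E; lra. Qed.

Lemma bern t x : 0 < t -> 1 <= x -> 1 + x * (t - 1) <= Rpower t x.
Proof.
intros Ht Hx. set (u := Rpower t x).
assert (Hu : 0 < u) by apply exp_pos.
set (m := u / x + 1 - 1 / x).
assert (Hm : 0 < m).
{ unfold m. assert (0 < u / x) by (apply Rdiv_lt_0_compat; lra).
  assert (1/x <= 1). { apply (Rmult_le_reg_r x). lra. field_simplify; lra. } lra. }
assert (H1 := ln_le_sub1 (u / m) ltac:(apply Rdiv_lt_0_compat; lra)).
assert (H2 := ln_le_sub1 (/ m) ltac:(apply Rinv_0_lt_compat; lra)).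
rewrite ln_div in H1 by lra. rewrite ln_Rinv in H2 by lra.
assert (Hlu : ln u = x * ln t) by (unfold u; apply ln_Rpower).
assert (Hc : (1/x) * (u/m - 1) + (1 - 1/x) * (/m - 1) = 0) by (unfold m; field; split; lra).
assert (Hix : 0 < 1/x) by (apply Rdiv_lt_0_compat; lra).
assert (Hix2 : 0 <= 1 - 1/x). { assert (1/x <= 1). { apply (Rmult_le_reg_r x). lra. field_simplify; lra. } lra. }
assert (Hle : ln t <= ln m).
{ assert (E : ln t = (1/x) * (ln u - ln m) + (1 - 1/x) * (- ln m) + ln m).
  { rewrite Hlu. field. lra. }
  rewrite E. pose proof (Rmult_le_compat_l _ _ _ (Rlt_le _ _ Hix) H1).
  pose proof (Rmult_le_compat_l _ _ _ Hix2 H2). lra. }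
assert (Htm : t <= m).
{ destruct (Rle_or_lt t m) as [?|Hlt]; auto. apply ln_increasing in Hlt; lra. }
unfold m in Htm.
assert (x * t <= u + x - 1).
{ apply (Rmult_le_compat_l x) in Htm; [|lra]. replace (x * (u / x + 1 - 1 / x)) with (u + x - 1) in Htm by (field; lra). lra. }
lra.
Qed.

Lemma Rpower_le_t t x : 0 < t < 1 -> 1 <= x -> Rpower t x <= t.
Proof. intros Ht Hx. unfold Rpower. rewrite <- (exp_ln t) at 2 by lra.
destruct (Rle_lt_or_eq_dec _ _ Hx) as [H|H]. left. apply exp_increasing.
assert (ln t < 0). { rewrite <- ln_1. apply ln_increasing; lra. } nra.
subst; rewrite Rmult_1_l; lra. Qed.
Lemma cont_eps (f : R -> R) z :
  (forall eps, 0 < eps -> exists d, 0 < d /\ forall y, Rabs (y - z) < d -> Rabs (f y - f z) < eps) ->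
  continuous f z.
Proof.
intros H. apply filterlim_locally. intros eps.
destruct (H eps (cond_pos eps)) as [d [Hd Hy]].
exists (mkposreal d Hd). intros y Hb. apply Hy. exact Hb.
Qed.
Lemma loc_ext (f g : R -> R) z d : 0 < d -> (forall y, Rabs (y - z) < d -> g y = f y) ->
  continuous g z -> continuous f z.
Proof. intros Hd H. apply continuous_ext_loc. exists (mkposreal d Hd). intros y Hb. apply H. exact Hb. Qed.

Definition hh x t := if Rle_dec t 0 then 1 else if Rle_dec 1 t then x else H_integrand x t.

Lemma hh_cont x z : 1 <= x -> 0 <= z <= 1 -> continuous (hh x) z.
Proof.
intros Hx Hz.
destruct (Rle_lt_or_eq_dec _ _ (proj1 Hz)) as [Hz0|Hz0].
- destruct (Rle_lt_or_eq_dec _ _ (proj2 Hz)) as [Hz1|Hz1].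
  + apply (loc_ext _ (fun t => (exp (x * ln t) - 1)/(t-1)) z (Rmin z (1 - z))).
    apply Rmin_glb_lt; lra.
    intros y Hy. pose proof (Rmin_l z (1-z)). pose proof (Rmin_r z (1-z)).
    apply Rabs_def2 in Hy. unfold hh, H_integrand, Rpower.
    destruct (Rle_dec y 0); [lra|]. destruct (Rle_dec 1 y); [lra|]. reflexivity.
    apply (ex_derive_continuous (fun t => (exp (x * ln t) - 1)/(t-1))). auto_derive. lra.
  + subst z. apply cont_eps. intros eps Heps.
    pose proof (derivable_pt_lim_power 1 x ltac:(lra) eps Heps) as [del Hdel].
    exists (Rmin del (1/2)). split. apply Rmin_glb_lt; [apply cond_pos|lra].
    intros y Hy. pose proof (Rmin_l del (1/2)). pose proof (Rmin_r del (1/2)).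
    unfold hh. destruct (Rle_dec 1 0); [lra|]. destruct (Rle_dec 1 1); [|lra].
    destruct (Rle_dec y 0). { apply Rabs_def2 in Hy; lra. }
    destruct (Rle_dec 1 y). { rewrite Rminus_diag, Rabs_R0; lra. }
    assert (Hne : y - 1 <> 0) by lra.
    specialize (Hdel (y - 1) Hne ltac:(lra)).
    replace (1 + (y - 1)) with y in Hdel by ring.
    unfold Rpower at 2 in Hdel. rewrite ln_1, Rmult_0_r, exp_0 in Hdel.
    replace (x - 1) with (x - 1) in Hdel by ring.
    unfold Rpower at 2 in Hdel. rewrite ln_1, Rmult_0_r, exp_0, Rmult_1_r in Hdel.
    exact Hdel.
- subst z. apply cont_eps. intros eps Heps.
  exists (Rmin (eps/2) (1/2)). split. apply Rmin_glb_lt; lra.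
  intros y Hy. pose proof (Rmin_l (eps/2) (1/2)). pose proof (Rmin_r (eps/2) (1/2)).
  apply Rabs_def2 in Hy.
  unfold hh. destruct (Rle_dec 0 0); [|lra].
  destruct (Rle_dec y 0). { rewrite Rminus_diag, Rabs_R0; lra. }
  destruct (Rle_dec 1 y); [lra|].
  unfold H_integrand. pose proof (Rpower_le_t y x ltac:(lra) Hx).
  assert (0 < Rpower y x) by apply exp_pos.
  replace ((Rpower y x - 1) / (y - 1) - 1) with ((y - Rpower y x) / (1 - y)) by (field; lra).
  rewrite Rabs_right. 2: { apply Rle_ge, Rdiv_le_0_compat; lra. }
  apply Rle_lt_trans with (y / (1 - y)).
  { unfold Rdiv. apply Rmult_le_compat_r. left; apply Rinv_0_lt_compat; lra. lra. }
  apply Rle_lt_trans with (2 * y). 2: lra.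
  apply (Rmult_le_reg_r (1 - y)). lra. field_simplify; nra.
Qed.
Lemma PI_lb : 313/100 < PI.
Proof.
destruct (PI_2_3_7_ineq 0) as [H _].
simpl in H. unfold tg_alt, PI_2_3_7_tg, Ratan_seq in H. simpl in H. lra.
Qed.
Lemma exp_nat n z : exp (INR n * z) = exp z ^ n.
Proof. induction n as [|n IH]. simpl. rewrite Rmult_0_l; apply exp_0.
rewrite S_INR, Rmult_plus_distr_r, Rmult_1_l, exp_plus, IH. simpl. ring. Qed.
Lemma exp_ub z : z < 1 -> exp z <= / (1 - z).
Proof. intros Hz. pose proof (exp_ineq1_le (-z)).
rewrite <- (Rinv_inv (exp z)). apply Rinv_le_contravar. lra. rewrite <- exp_Ropp. lra. Qed.
Lemma ln4_lb : 137/100 < ln 4.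
Proof.
assert (H : exp (137/100) < 4).
{ replace (137/100) with (INR 128 * (137/12800)) by (simpl; field).
  rewrite exp_nat. apply Rle_lt_trans with ((/ (1 - 137/12800))^128).
  apply pow_incr. split. left; apply exp_pos. apply exp_ub. lra.
  replace (/ (1 - 137/12800)) with (IZR 12800 / IZR 12663) by (field; lra).
  unfold Rdiv. rewrite Rpow_mult_distr, pow_inv, !pow_IZR.
  apply (Rmult_lt_reg_r (IZR (12663 ^ Z.of_nat 128))).
  apply IZR_lt; reflexivity.
  rewrite Rmult_assoc, Rinv_l. rewrite Rmult_1_r, <- mult_IZR. apply IZR_lt. vm_compute. reflexivity.
  apply not_0_IZR; vm_compute; discriminate. }
rewrite <- (ln_exp (137/100)). apply ln_increasing. apply exp_pos. exact H.
Qed.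

Lemma H_le x : 4 <= x -> H x <= ln x + 1.
Proof.
intros Hx. set (a := 1 - 1/x).
assert (Ha : 0 < a < 1). { unfold a. assert (0 < 1/x) by (apply Rdiv_lt_0_compat; lra).
  assert (1/x < 1). { apply (Rmult_lt_reg_r x). lra. field_simplify; lra. } lra. }
assert (Hex : ex_RInt (hh x) 0 1).
{ apply (ex_RInt_continuous (V := R_CompleteNormedModule)). intros z Hz. rewrite Rmin_left, Rmax_right in Hz by lra. apply hh_cont; lra. }
assert (E : H x = RInt (hh x) 0 1).
{ unfold H. apply RInt_ext. intros t Ht. rewrite Rmin_left, Rmax_right in Ht by lra.
  unfold hh. destruct (Rle_dec t 0); [lra|]. destruct (Rle_dec 1 t); [lra|]. reflexivity. }
rewrite E. rewrite <- (RInt_Chasles (hh x) 0 a 1).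
2: apply (ex_RInt_Chasles_1 (hh x) 0 a 1 ltac:(lra) Hex).
2: apply (ex_RInt_Chasles_2 (hh x) 0 a 1 ltac:(lra) Hex).
assert (HI : is_RInt (fun t => / (1 - t)) 0 a (minus ((fun t => - ln (1 - t)) a) ((fun t => - ln (1 - t)) 0))).
{ apply (is_RInt_derive (fun t => - ln (1 - t))).
  - intros t Ht. rewrite Rmin_left, Rmax_right in Ht by lra. auto_derive. lra. field. lra.
  - intros t Ht. rewrite Rmin_left, Rmax_right in Ht by lra.
    apply (ex_derive_continuous (fun t => / (1 - t))). auto_derive. lra. }
assert (I1 : RInt (hh x) 0 a <= ln x).
{ replace (ln x) with (minus ((fun t => - ln (1 - t)) a) ((fun t => - ln (1 - t)) 0)).
  rewrite <- (is_RInt_unique _ _ _ _ HI). apply RInt_le. lra.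
  apply (ex_RInt_Chasles_1 (hh x) 0 a 1 ltac:(lra) Hex). exists (minus ((fun t => - ln (1 - t)) a) ((fun t => - ln (1 - t)) 0)). exact HI.
  intros t Ht. unfold hh. destruct (Rle_dec t 0); [lra|]. destruct (Rle_dec 1 t); [lra|].
  unfold H_integrand. assert (0 < Rpower t x) by apply exp_pos.
  replace ((Rpower t x - 1) / (t - 1)) with ((1 - Rpower t x) / (1 - t)) by (field; lra).
  unfold Rdiv. rewrite <- (Rmult_1_l (/ (1 - t))) at 2. apply Rmult_le_compat_r. left; apply Rinv_0_lt_compat; lra. lra.
  unfold minus, plus, opp; simpl. unfold a. replace (1 - (1 - 1/x)) with (/ x) by (field; lra).
  rewrite ln_Rinv by lra. replace (1 - 0) with 1 by ring. rewrite ln_1. ring. }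
assert (I2 : RInt (hh x) a 1 <= 1).
{ apply Rle_trans with (RInt (fun _ => x) a 1).
  apply RInt_le. lra. apply (ex_RInt_Chasles_2 (hh x) 0 a 1 ltac:(lra) Hex). apply ex_RInt_const.
  intros t Ht. unfold hh. destruct (Rle_dec t 0); [lra|]. destruct (Rle_dec 1 t); [lra|].
  unfold H_integrand. pose proof (bern t x ltac:(lra) ltac:(lra)).
  replace ((Rpower t x - 1) / (t - 1)) with ((1 - Rpower t x) / (1 - t)) by (field; lra).
  apply (Rmult_le_reg_r (1 - t)). lra. field_simplify; [|lra]. lra.
  rewrite RInt_const. unfold scal; simpl. unfold mult; simpl. unfold a. right; field. lra. }
unfold plus; simpl. lra.
Qed.

Theorem mainTheorem13 (x : R) (hx : 4 <= x) :
  H x < 2 * ln x / (1 + 6 / (PI ^ 2 * x)).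
Proof.
pose proof (H_le x hx) as H0. pose proof PI_lb. pose proof ln4_lb.
assert (ln 4 <= ln x) by (apply ln_le; lra).
set (L := ln x) in *. set (c := 6 / (PI ^ 2 * x)).
assert (Hp : 9.7969 * 4 <= PI ^ 2 * x). { simpl. nra. }
assert (Hc0 : 0 < c). { unfold c. apply Rdiv_lt_0_compat; lra. }
assert (Hc : c <= 6 / (9.7969 * 4)). { unfold c. apply Rmult_le_compat_l. lra. apply Rinv_le_contravar; lra. }
apply Rle_lt_trans with (L + 1). exact H0.
apply (Rmult_lt_reg_r (1 + c)). lra.
unfold Rdiv. rewrite Rmult_assoc, Rinv_l, Rmult_1_r by lra.
nra.
Qed.
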